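(* Let $C$ be a set of colours and $W_2=\{w_0w_1w_2\cdots\in C^\omega:\ w_i\neq w_{i+1}\text{ for all } i\}$. Then $W_2$ does not have ($\varepsilon$-free) chromatic memory $<|C|$; consequently $W_2$ does not have $\varepsilon$-chromatic memory $<|C|$ either.
   Context: A $C$-game is $(G,V_{\mathrm{Eve}},v_0,W)$ with $G$ a $C$-graph (vertices with coloured directed edges $v\xrightarrow{c}v'$, every vertex having an outgoing edge). A strategy is $(S,\pi,s_0)$ with $S$ a $C$-graph, $\pi:S\to G$ an edge- and colour-preserving map, $\pi(s_0)=v_0$, such that for all $v\notin V_{\mathrm{Eve}}$, $v\xrightarrow{c}v'\in E(G)$, $s\in\pi^{-1}(v)$ there is $s'\in\pi^{-1}(v')$ with $s\xrightarrow{c}s'$; it is winning if all infinite paths from $s_0$ have colour sequence in $W$. A product strategy over $M$ has $V(S)\subseteq V(G)\times M$ and $\pi(v,m)=v$; it is chromatic if there is $\delta:M\times C\to M$ with $m'=\delta(m,c)$ for each edge $(v,m)\xrightarrow{c}(v',m')$ of $S$. $W$ has chromatic memory $<\nu$ if every game with objective $W$ having a winning strategy has a winning chromatic product strategy with $|\pi^{-1}(v)|<\nu$ for all $v$. With a fresh colour $\varepsilon$ and $C^\varepsilon=C\sqcup\{\varepsilon\}$, $W^\varepsilon$ is the set of $w\in(C^\varepsilon)^\omega$ whose $\varepsilon$-free projection is infinite and in $W$ or finite with a continuation in $W$; $W$ has $\varepsilon$-chromatic memory $<\nu$ if every $C^\varepsilon$-game with objective $W^\varepsilon$ having a winning strategy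 has a winning chromatic product strategy over some $M$ with $|M|<\nu$ whose update function satisfies $\delta(m,\varepsilon)=m$. *)

(* Defs.v *)
From mathcomp Require Import all_boot.
Set Implicit Arguments. Unset Strict Implicit. Unset Printing Implicit Defensive.

Definition card_le (A B : Type) : Prop := exists f : A -> B, injective f.
Definition card_lt (A B : Type) : Prop := card_le A B /\ ~ card_le B A.

Definition objective (C : Type) := (nat -> C) -> Prop.

Definition is_cgraph (C V : Type) (E : V -> C -> V -> Prop) : Prop :=
  forall v, exists c v', E v c v'.

Definition is_strategy (C V : Type) (E : V -> C -> V -> Prop) (VEve : V -> Prop)
  (v0 : V) (S : Type) (ES : S -> C -> S -> Prop) (pi : S -> V) (s0 : S) : Prop :=
  [/\ is_cgraph ES,
      (forall s c s', ES s c s' -> E (pi s) c (pi s')),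
      pi s0 = v0 &
      (forall v c v' s, ~ VEve v -> E v c v' -> pi s = v ->
          exists s', pi s' = v' /\ ES s c s')].

Definition winning_from (C S : Type) (ES : S -> C -> S -> Prop) (s0 : S)
  (W : objective C) : Prop :=
  forall (s : nat -> S) (w : nat -> C), s 0 = s0 ->
    (forall i, ES (s i) (w i) (s i.+1)) -> W w.

Definition has_winning_strategy (C V : Type) (E : V -> C -> V -> Prop)
  (VEve : V -> Prop) (v0 : V) (W : objective C) : Prop :=
  exists (S : Type) (ES : S -> C -> S -> Prop) (pi : S -> V) (s0 : S),
    is_strategy E VEve v0 ES pi s0 /\ winning_from ES s0 W.

(** Product strategies over M: the vertex set is a subset P of V * M
    (realised as the subtype [sig P]) and pi is the first projection. *)
Definition prod_pi (V M : Type) (P : V * M -> Prop) (s : sig P) : V := (proj1_sig s).1.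

Definition is_chromatic (C V M : Type) (P : V * M -> Prop)
  (ES : sig P -> C -> sig P -> Prop) (delta : M -> C -> M) : Prop :=
  forall s c s', ES s c s' -> (proj1_sig s').2 = delta (proj1_sig s).2 c.

(** W has chromatic memory < |D| (the cardinal nu is given as |D|). *)
Definition has_chromatic_memory_lt (C : Type) (W : objective C) (D : Type) : Prop :=
  forall (V : Type) (E : V -> C -> V -> Prop) (VEve : V -> Prop) (v0 : V),
    is_cgraph E -> has_winning_strategy E VEve v0 W ->
    exists (M : Type) (P : V * M -> Prop) (ES : sig P -> C -> sig P -> Prop)
           (s0 : sig P) (delta : M -> C -> M),
      [/\ is_strategy E VEve v0 ES (@prod_pi V M P) s0,
          winning_from ES s0 W,
          is_chromatic ES delta &
          forall v : V, card_lt {s : sig P | prod_pi s = v} D].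

(** The fresh colour epsilon: C^eps = option C, with None = epsilon. *)

(** If w has infinitely many non-epsilon letters this says
    u is the epsilon-free projection of w; otherwise it says u is a
    continuation of the (finite) projection. *)
Definition proj_prefix (C : Type) (w : nat -> option C) (u : nat -> C) : Prop :=
  forall n, let p := pmap id (map w (iota 0 n)) in p = map u (iota 0 (size p)).

Definition W_eps (C : Type) (W : objective C) : objective (option C) :=
  fun w =>
    ((forall n, exists i, n <= i /\ w i <> None) /\
       exists u, proj_prefix w u /\ W u)
    \/
    ((exists n, forall i, n <= i -> w i = None) /\
       exists u, proj_prefix w u /\ W u).

Definition has_eps_chromatic_memory_lt (C : Type) (W : objective C) (D : Type) : Prop :=
  forall (V : Type) (E : V -> option C -> V -> Prop) (VEve : V -> Prop) (v0 : V),
    is_cgraph E -> has_winning_strategy E VEve v0 (W_eps W) ->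
    exists (M : Type) (P : V * M -> Prop)
           (ES : sig P -> option C -> sig P -> Prop)
           (s0 : sig P) (delta : M -> option C -> M),
      [/\ is_strategy E VEve v0 ES (@prod_pi V M P) s0,
          winning_from ES s0 (W_eps W),
          is_chromatic ES delta,
          (forall m, delta m None = m) &
          card_lt M D].

Definition W2 (C : Type) : objective C := fun w => forall i, w i <> w i.+1.

(* Main.v *)
Require Import Defs.
From mathcomp Require Import all_boot.
From Stdlib Require Import Classical ClassicalEpsilon ProofIrrelevance.

Set Implicit Arguments. Unset Strict Implicit.

Inductive vx (C : Type) := VStart | VZ of C & C | VT of C.
Arguments VStart {C}.

Definition gE C K (col : C -> K) (v : vx C) (k : K) (v' : vx C) : Prop :=
  match v, v' with
  | VStart, VZ x y => x <> y /\ exists c, k = col c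
  | VZ x y, VT d => k = col d /\ (d = x \/ d = y \/ x = y)
  | VT e, VT f => k = col f /\ f <> e
  | _, _ => False end.

Definition gEve C (v : vx C) : Prop := if v is VZ _ _ then True else False.

Inductive sx (C : Type) := SStart | SZ of C & C & C | ST of C.
Arguments SStart {C}.

Definition sE C K (col : C -> K) (s : sx C) (k : K) (s' : sx C) : Prop :=
  match s, s' with
  | SStart, SZ c x y => x <> y /\ k = col c
  | SZ c x y, ST d => k = col d /\ d <> c /\ (d = x \/ d = y \/ x = y)
  | ST e, ST f => k = col f /\ f <> e
  | _, _ => False end.

Definition spi C (s : sx C) : vx C :=
  match s with SStart => VStart | SZ _ x y => VZ x y | ST e => VT e end.

Lemma other (C : Type) (a b : C) (hab : a <> b) (e : C) : exists f, f <> e.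
Proof.
case: (classic (e = a)) => [->|h]; [exists b | exists a]; auto.
Qed.

Lemma gE_cgraph C K (col : C -> K) (a b : C) (hab : a <> b) : is_cgraph (gE col).
Proof.
case => [|x y|e].
- exists (col a), (VZ a b); split; eauto.
- exists (col x), (VT x); split; auto.
- have [f hf] := other hab e. exists (col f), (VT f); split; auto.
Qed.

Lemma sE_local C K (col : C -> K) s s' s'' k k' :
  sE col s k s' -> sE col s' k' s'' -> exists c d, k = col c /\ k' = col d /\ c <> d.
Proof.
move: s s' s'' => [|c x y|e] [|c' x' y'|e'] [|c'' x'' y''|e''] //=.
- move=> [_ ->] [-> [h _]]; exists c', e''; auto.
- move=> [-> _] [-> h]; exists e', e''; auto.
- move=> [-> _] [-> h]; exists e', e''; auto.
Qed.

Lemma strat C K (col : C -> K) (a b : C) (hab : a <> b) :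
  is_strategy (gE col) (@gEve C) VStart (sE col) (@spi C) SStart.
Proof.
split.
- case => [|c x y|e].
  + exists (col a), (SZ a a b); split; auto.
  + case: (classic (x = y)) => hxy.
    * have [d hd] := other hab c. exists (col d), (ST d); simpl; auto.
    * case: (classic (x = c)) => hxc.
      - exists (col y), (ST y); simpl; split; auto; split; auto.
        by move=> h; apply hxy; rewrite hxc h.
      - exists (col x), (ST x); simpl; auto.
  + have [f hf] := other hab e. exists (col f), (ST f); simpl; auto.
- move=> [|c x y|e] k [|c' x' y'|e'] //=.
  + move=> [h ->]; split; eauto.
  + move=> [-> [_ h]]; split; auto.
- done.
- move=> v k v' s nE hE hs; subst v.
  destruct s as [|c x y|e]; simpl in *.
  + destruct v' as [|x y|e]; simpl in hE; try done.
    destruct hE as [hxy [c ->]]. exists (SZ c x y); split; [done | simpl; auto].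
  + by case: (nE I).
  + destruct v' as [|x y|f]; simpl in hE; try done.
    destruct hE as [-> h]. exists (ST f); split; [done | simpl; auto].
Qed.

Lemma path_ex S K (ES : S -> K -> S -> Prop) : is_cgraph ES ->
  forall x, exists (s : nat -> S) (w : nat -> K), s 0 = x /\ forall i, ES (s i) (w i) (s i.+1).
Proof.
move=> hcg x.
have f : forall s, {p : K * S | ES s p.1 p.2}.
  move=> s; apply: constructive_indefinite_description.
  have [k [s' h]] := hcg s. by exists (k, s').
pose s := fun n => iter n (fun y => (proj1_sig (f y)).2) x.
exists s, (fun i => (proj1_sig (f (s i))).1); split => // i.
rewrite [s i.+1]/s iterS -/(s i). exact: (proj2_sig (f (s i))).
Qed.

Lemma bad S K (ES : S -> K -> S -> Prop) W x y z k k' :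
  is_cgraph ES -> winning_from ES x W -> ES x k y -> ES y k' z ->
  exists w, w 0 = k /\ w 1 = k' /\ W w.
Proof.
move=> hcg hw h1 h2.
have [q [v [hq0 hq]]] := path_ex hcg z.
pose s := fun i => match i with 0 => x | 1 => y | n.+2 => q n end.
pose w := fun i => match i with 0 => k | 1 => k' | n.+2 => v n end.
exists w; split => //; split => //.
apply: (hw s) => // [[|[|n]]] //=. by rewrite hq0.
Qed.

Lemma neg_core C K (col : C -> K) (W : objective K) (M : Type) (P : vx C * M -> Prop)
  (ES : sig P -> K -> sig P -> Prop) s0 delta :
  is_strategy (gE col) (@gEve C) VStart ES (@prod_pi _ M P) s0 ->
  winning_from ES s0 W -> is_chromatic ES delta ->
  (forall w c, w 0 = col c -> w 1 = col c -> ~ W w) ->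
  forall c c', delta (proj1_sig s0).2 (col c) = delta (proj1_sig s0).2 (col c') -> c = c'.
Proof.
move=> [hcg hed hpi hadam] hw hch hW c c' he.
case: (classic (c = c')) => // hne; exfalso.
have e1 : gE col VStart (col c) (VZ c c') by split; eauto.
have e2 : gE col VStart (col c') (VZ c c') by split; eauto.
have [t [ht1 ht2]] := hadam VStart _ _ s0 (fun x : False => x) e1 hpi.
have [t' [ht1' ht2']] := hadam VStart _ _ s0 (fun x : False => x) e2 hpi.
have tt : t = t'.
  have m1 := hch _ _ _ ht2. have m2 := hch _ _ _ ht2'.
  move: ht1 ht1' m1 m2 {ht2 ht2'}.
  case: t => [[v m] p]; case: t' => [[v' m'] p'].
  rewrite /prod_pi /= => h1 h2 h3 h4. subst.
  rewrite -he in p' *. by rewrite (proof_irrelevance _ p p').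
have [k [t'' htt]] := hcg t.
have hE := hed _ _ _ htt. rewrite ht1 in hE.
move: hE; case: (prod_pi t'') => // d [hk hd].
case: hd => [hd|[hd|hd]]; last by [].
- have [w [w0 [w1 ww]]] := bad hcg hw ht2 htt.
  apply: (hW w c) => //. by rewrite w1 hk hd.
- rewrite tt in htt.
  have [w [w0 [w1 ww]]] := bad hcg hw ht2' htt.
  apply: (hW w c') => //. by rewrite w1 hk hd.
Qed.

Theorem propositionB1 (C : Type) (a b : C) (hab : a <> b) :
  ~ has_chromatic_memory_lt (@W2 C) C /\ ~ has_eps_chromatic_memory_lt (@W2 C) C.
Proof.
split.
- move=> H.
  have hws : has_winning_strategy (gE (fun x : C => x)) (@gEve C) VStart (@W2 C).
    exists (sx C), (sE (fun x : C => x)), (@spi C), SStart; split.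
      exact: strat hab.
    move=> s w _ h i.
    have [c [d [h1 [h2 h3]]]] := sE_local (h i) (h i.+1). by rewrite h1 h2.
  have [M [P [ES [s0 [delta [hs hw hc hcard]]]]]] := H _ _ _ _ (gE_cgraph _ hab) hws.
  have hW : forall w (c : C), w 0 = c -> w 1 = c -> ~ W2 w.
    move=> w c h0 h1 hw2; apply: (hw2 0); by rewrite h0 h1.
  have ex : forall c : C, exists t : {s : sig P | prod_pi s = VZ a b},
      (proj1_sig (proj1_sig t)).2 = delta (proj1_sig s0).2 c.
    move=> c. case: hs => hcg hed hpi hadam.
    have e1 : gE (fun x : C => x) VStart c (VZ a b) by split; eauto.
    have [t [ht1 ht2]] := hadam VStart _ _ s0 (fun x : False => x) e1 hpi.
    exists (exist _ t ht1). exact: hc _ _ _ ht2.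
  have f := fun c => constructive_indefinite_description _ (ex c).
  case: (hcard (VZ a b)) => _ hn; apply: hn.
  exists (fun c => proj1_sig (f c)) => c c' he.
  apply: (neg_core hs hw hc hW).
  by rewrite -(proj2_sig (f c)) -(proj2_sig (f c')) he.
- move=> H.
  have hws : has_winning_strategy (gE (@Some C)) (@gEve C) VStart (W_eps (@W2 C)).
    exists (sx C), (sE (@Some C)), (@spi C), SStart; split.
      exact: strat hab.
    move=> s w _ h.
    have hw : forall i, w i = Some (odflt a (w i)).
      move=> i. have [c [d [h1 _]]] := sE_local (h i) (h i.+1). by rewrite h1.
    left; split.
      move=> n; exists n; split => //; by rewrite hw.
    exists (fun i => odflt a (w i)); split.
      move=> n /=.
      have -> : map w (iota 0 n) = map Some (map (fun i => odflt a (w i)) (iota 0 n)).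
        rewrite -map_comp; apply: eq_map => i; exact: hw.
      by rewrite (@map_pK _ _ id (@Some C)) // size_map size_iota.
    move=> i.
    have [c [d [h1 [h2 h3]]]] := sE_local (h i) (h i.+1). by rewrite h1 h2.
  have [M [P [ES [s0 [delta [hs hw hc hN hcard]]]]]] := H _ _ _ _ (gE_cgraph _ hab) hws.
  have hW : forall w (c : C), w 0 = Some c -> w 1 = Some c -> ~ W_eps (@W2 C) w.
    move=> w c h0 h1 hw2.
    have : exists u, proj_prefix w u /\ W2 u by case: hw2 => [[_ ?]|[_ ?]].
    case=> u [hp hu]. have := hp 2. rewrite /= h0 h1 /=. case=> e0 e1.
    apply: (hu 0). by rewrite -e0 -e1.
  case: hcard => _ hn; apply: hn.
  exists (fun c => delta (proj1_sig s0).2 (Some c)) => c c' he.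
  exact: (neg_core hs hw hc hW).
Qed.
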